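(* Let $t\ge 2$ and $s\ge1$ be integers and let $H$ be a $t$-uniform hypergraph on the vertex set $[n]=\{1,\dots,n\}$. Suppose $H$ does not contain a complete $t$-partite hypergraph with parts $V_1,\dots,V_t\subseteq[n]$ such that $|V_i|=s$ for all $i$ and every element of $V_i$ is smaller than every element of $V_j$ whenever $i<j$ (i.e., there are no such sets with every $t$-set $\{v_1,\dots,v_t\}$, $v_i\in V_i$, being an edge of $H$). Then $H$ has at most $2n^{t-\delta}$ edges, where $\delta=\frac{1}{ts^{t-1}}$. *)

(* Defs.v *)
From mathcomp Require Import all_boot all_order all_algebra.
From mathcomp Require Import all_classical all_reals all_analysis.
Set Implicit Arguments. Unset Strict Implicit. Unset Printing Implicit Defensive.
Import Order.TTheory GRing.Theory Num.Theory.

(* A t-uniform hypergraph on vertex set 'I_n (= {0,..,n-1}, ordered as nat,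
   order-isomorphic to [n]) is a set of edges, each a t-element vertex set. *)
Definition uniform (n t : nat) (H : {set {set 'I_n}}) : Prop :=
  forall e, e \in H -> #|e| = t.

Definition contains_ordered_Kts (n t s : nat) (H : {set {set 'I_n}}) : Prop :=
  exists V : 'I_t -> {set 'I_n},
    [/\ forall i, #|V i| = s,
        forall (i j : 'I_t), (i < j)%N ->
          forall x y, x \in V i -> y \in V j -> (x < y)%N
      & forall f : 'I_t -> 'I_n, (forall i, f i \in V i) ->
          [set f i | i : 'I_t] \in H].

(* Main.v *)
Require Import Defs.
From mathcomp Require Import all_boot all_order all_algebra.
From mathcomp Require Import all_classical all_reals all_analysis.
From mathcomp Require Import zify ring lra.
Import Order.TTheory GRing.Theory Num.Theory.
Set Implicit Arguments. Unset Strict Implicit. Unset Printing Implicit Defensive.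


Lemma sub_card (T : finType) (A : {set T}) m : m <= #|A| ->
  exists B : {set T}, B \subset A /\ #|B| = m.
Proof.
elim: m => [|m IH] lt; first by exists (@finset.set0 T); rewrite finset.sub0set finset.cards0.
have [B [BA cB]] := IH (ltnW lt).
have : ~~ (A \subset B).
  apply/negP => AB; have := subset_leq_card AB; rewrite cB; lia.
case/fintype.subsetPn => x xA xB.
exists (x |: B); split; first by rewrite finset.subUset finset.sub1set xA BA.
by rewrite cardsU1 xB cB.
Qed.

Lemma ffact_lb s d : (d.+1 - s) ^ s <= d ^_ s.
Proof.
elim: s d => [|s IH] d; first by rewrite expn0 ffactn0.
rewrite ffactnS expnS.
case: d => [|d]; first by case: s {IH}.
rewrite /=.
have h := IH d.
have e : d.+2 - s.+1 = d.+1 - s by [].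
rewrite e; apply: leq_mul; first by rewrite leq_subr.
exact: h.
Qed.

Lemma ffact_ub n m : n ^_ m <= n ^ m.
Proof.
elim: m n => [|m IH] n; first by rewrite ffactn0 expn0.
rewrite ffactnS expnS leq_mul //.
apply: leq_trans (IH _) _.
case: n => [|n] /=; first by case: m {IH}.
case: m {IH} => [|m]; first by rewrite !expn0.
by rewrite leq_exp2r.
Qed.

Lemma pair_ineq x y m : x ^ m * y + y ^ m * x <= x ^ m.+1 + y ^ m.+1.
Proof.
wlog le : x y / x <= y.
  move=> W; case: (leqP x y) => h; first exact: W.
  rewrite addnC [_ + y ^ _]addnC; apply: W; exact: ltnW.
have X : x ^ m <= y ^ m.
  case: m => [|m]; first by rewrite !expn0.
  by rewrite leq_exp2r.
rewrite !expnS.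
move: X; set X := x ^ m; set Y := y ^ m => XY; nia.
Qed.

Lemma cheb (I : finType) (A : pred I) (a : I -> nat) m :
  (\sum_(i in A) a i ^ m) * (\sum_(i in A) a i) <= #|A| * \sum_(i in A) a i ^ m.+1.
Proof.
rewrite -(@leq_pmul2l 2) //.
have E1 : (\sum_(i in A) a i ^ m) * (\sum_(i in A) a i) =
   \sum_(i in A) \sum_(j in A) a i ^ m * a j.
  rewrite big_distrl /=; apply: eq_bigr => i _; by rewrite big_distrr.
have E2 : (\sum_(i in A) a i ^ m) * (\sum_(i in A) a i) =
   \sum_(i in A) \sum_(j in A) a j ^ m * a i.
  rewrite E1 exchange_big //.
rewrite mul2n -addnn {1}E1 E2 -big_split /=.
have E3 : #|A| * \sum_(i in A) a i ^ m.+1 = \sum_(i in A) \sum_(j in A) a i ^ m.+1.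
  rewrite big_distrr /=; apply: eq_bigr => i _.
  by rewrite sum_nat_const mulnC.
have E4 : #|A| * \sum_(i in A) a i ^ m.+1 = \sum_(i in A) \sum_(j in A) a j ^ m.+1.
  by rewrite E3 exchange_big.
rewrite mul2n -addnn {1}E3 E4 -big_split /=.
apply: leq_sum => i _; rewrite -!big_split /=. apply: leq_sum => j _.
exact: pair_ineq.
Qed.

Lemma powmean (I : finType) (A : pred I) (a : I -> nat) k :
  (\sum_(i in A) a i) ^ k.+1 <= #|A| ^ k * \sum_(i in A) a i ^ k.+1.
Proof.
elim: k => [|k IH]; first by rewrite expn1 expn0 mul1n; apply: leq_sum => i _; rewrite expn1.
rewrite expnS mulnC.
apply: leq_trans (leq_mul IH (leqnn _)) _.
rewrite -mulnA expnS [#|A| * _]mulnC -mulnA leq_mul2l; apply/orP; right.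
exact: cheb.
Qed.


Lemma card_cond (T : finType) (A : {set T}) (P : pred T) :
  #|[set x in A | P x]| = \sum_(x in A) P x.
Proof.
rewrite -sum1_card big_mkcond /= [RHS]big_mkcond /=; apply: eq_bigr => x _.
by rewrite inE; case: (x \in A); case: (P x).
Qed.

Lemma card_sumT (T : finType) (A : {set T}) : #|A| = \sum_x (x \in A).
Proof. by rewrite -sum1_card big_mkcond. Qed.

Section Step.
Variables (n k s : nat) (H : {set {set 'I_n}}).

Definition Dset (f : {set 'I_n}) : {set 'I_n} :=
  [set x : 'I_n | [forall y in f, (y < x)%N] && (f :|: [set x] \in H)].
Definition Fk := [set f : {set 'I_n} | #|f| == k.+1].
Definition Ss := [set S : {set 'I_n} | #|S| == s].
Definition Gset (S : {set 'I_n}) := [set f in Fk | S \subset Dset f].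

Hypothesis unifH : uniform k.+2 H.

Lemma cardH : #|H| <= \sum_(f in Fk) #|Dset f|.
Proof.
pose Hx (x : 'I_n) := [set e in H | (x \in e) && [forall y in e, (y <= x)%N]].
have step1 : #|H| <= \sum_x #|Hx x|.
  rewrite -sum1_card.
  have: \sum_(e in H) 1 <= \sum_(e in H) \sum_x (e \in Hx x).
    apply: leq_sum => e eH.
    have e0 : 0 < #|e| by rewrite (unifH eH).
    have [x0 x0e] := card_gt0P e0.
    have [x xe xmax] := @arg_maxnP _ x0 (fun i => i \in e) (fun i : 'I_n => nat_of_ord i) x0e.
    rewrite (bigD1 x) //=.
    have -> : e \in Hx x.
      rewrite inE eH xe /=; apply/forallP => y; apply/implyP => ye; exact: xmax.
    by [].
  move/leq_trans; apply; rewrite exchange_big /=; apply: leq_sum => x _.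
  rewrite -card_cond; apply: subset_leq_card; apply/fintype.subsetP => e; rewrite inE.
  by case/andP.
have step2 : forall x, #|Hx x| <= #|[set f in Fk | x \in Dset f]|.
  move=> x.
  rewrite -(@card_in_imset _ _ (fun e => e :\ x)); last first.
    move=> e1 e2; rewrite !inE => /andP [_ /andP [x1 _]] /andP [_ /andP [x2 _]] E.
    by rewrite -(finset.setD1K x1) -(finset.setD1K x2) E.
  apply: subset_leq_card; apply/fintype.subsetP => f /imsetP [e]; rewrite inE.
  case/andP => eH /andP [xe /forallP emax] ->.
  rewrite !inE; apply/andP; split.
    by move: (cardsD1 x e); rewrite xe (unifH eH) add1n => -[<-].
  apply/andP; split.
    apply/forallP => y; apply/implyP; rewrite !inE => /andP [yx ye].
    have := implyP (emax y) ye; rewrite leq_eqVlt => /orP [/eqP yx'|//].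
    by move: yx; rewrite -(inj_eq val_inj) /= yx' eqxx.
  by rewrite finset.setUC finset.setD1K.
apply: leq_trans step1 _.
apply: (@leq_trans (\sum_x #|[set f in Fk | x \in Dset f]|)); first by apply: leq_sum => x _; exact: step2.
under eq_bigr do rewrite card_cond.
rewrite exchange_big /=; apply: leq_sum => f _.
by rewrite card_sumT.
Qed.

Lemma sumG : \sum_(S in Ss) #|Gset S| = \sum_(f in Fk) 'C(#|Dset f|, s).
Proof.
under eq_bigr do rewrite card_cond.
rewrite exchange_big; apply: eq_bigr => f _.
rewrite -cards_draws -card_cond; apply: eq_card => S.
by rewrite !inE andbC.
Qed.

Lemma ffact_sum : \sum_(f in Fk) ((#|Dset f|).+1 - s) ^ s
   <= s`! * \sum_(f in Fk) 'C(#|Dset f|, s).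
Proof.
rewrite big_distrr /=; apply: leq_sum => f _.
by rewrite mulnC bin_ffact ffact_lb.
Qed.

Lemma Gunif S : uniform k.+1 (Gset S).
Proof. by move=> f; rewrite !inE => /andP [/eqP]. Qed.

Hypothesis s1 : 0 < s.

Lemma Gfree : ~ contains_ordered_Kts k.+2 s H -> forall S, S \in Ss ->
  ~ contains_ordered_Kts k.+1 s (Gset S).
Proof.
move=> nH S; rewrite inE => /eqP cS [V [cV ord tr]]; apply: nH.
have inedge : forall (i : 'I_k.+1) x, x \in V i ->
    exists2 f, f \in Gset S & x \in f.
  move=> i x xV.
  pose g := fun j : 'I_k.+1 => if j == i then x else odflt x [pick z in V j].
  have gV : forall j, g j \in V j.
    move=> j; rewrite /g; case: eqP => [->//|_].
    case: pickP => [z /= //|none].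
    have := cV j; rewrite (eq_card0 none) => s0; move: s1; by rewrite -s0.
  exists [set g j | j : 'I_k.+1]; first exact: tr.
  by apply/imsetP; exists i => //; rewrite /g eqxx.
exists (fun i : 'I_k.+2 => if (i < k.+1)%N then V (inord i) else S); split.
- by move=> i; case: ifP.
- move=> i j ij x y.
  have ik : (i < k.+1)%N by apply: leq_trans ij _; rewrite -ltnS.
  rewrite ik; case: ifP => jk xV yV.
    by apply: (ord (inord i) (inord j)) => //; rewrite !inordK.
  have [f fG xf] := inedge _ _ xV.
  move: fG; rewrite inE => /andP [_ /fintype.subsetP SD].
  have := SD _ yV; rewrite inE => /andP [/forallP fy _].
  exact: (implyP (fy x) xf).
- move=> f fV.
  pose g := fun j : 'I_k.+1 => f (widen_ord (leqnSn _) j).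
  have gV : forall j, g j \in V j.
    move=> j; have := fV (widen_ord (leqnSn _) j).
    by rewrite /= ltn_ord inord_val.
  have gG := tr g gV.
  have fm : f ord_max \in S by have := fV ord_max; rewrite /= ltnn.
  move: gG; rewrite inE => /andP [_ /fintype.subsetP SD].
  have := SD _ fm; rewrite inE => /andP [_ HH].
  suff -> : [set f i | i : 'I_k.+2] = [set g j | j : 'I_k.+1] :|: [set f ord_max] by [].
  apply/setP => y; rewrite !inE; apply/imsetP/orP.
    case=> i _ ->; case: (ltnP i k.+1) => ik.
      left; apply/imsetP; exists (Ordinal ik) => //; rewrite /g; congr f; exact: val_inj.
    right; apply/eqP; congr f; apply: val_inj => /=.
    by apply/eqP; rewrite eqn_leq ik -ltnS ltn_ord.
  case=> [/imsetP [j _ ->]|]; first by exists (widen_ord (leqnSn _) j).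
  by move=> /eqP ->; exists ord_max.
Qed.

End Step.

Local Open Scope ring_scope.

Lemma bin_le_pow n m : ('C(n, m) <= n ^ m)%N.
Proof.
apply: leq_trans (ffact_ub n m); rewrite -bin_ffact.
by rewrite leq_pmulr // fact_gt0.
Qed.

Lemma mainP (R : realFieldType) s k : (0 < s)%N ->
  forall n (H : {set {set 'I_n}}) (rho : R), 0 < rho ->
  rho ^+ (s ^ k) = n%:R -> uniform k.+1 H -> ~ contains_ordered_Kts k.+1 s H ->
  #|H|%:R * rho <= 4 * n%:R ^+ k.+1 + (s.-1)%:R * n%:R ^+ k * rho.
Proof.
case: s => // s' s0; rewrite [s'.+1.-1]/=.
elim: k => [|k IH] n H rho rho0 rhoE unifH nH.
- rewrite expn0 expr1 in rhoE.
  have cH : (#|H| <= s')%N.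
    rewrite leqNgt; apply/negP => lt; apply: nH.
    pose U := [set x : 'I_n | [set x] \in H].
    have HU : (#|H| <= #|U|)%N.
      apply: leq_trans (leq_imset_card (fun x => [set x]) (mem U)).
      apply: subset_leq_card; apply/fintype.subsetP => e eH.
      have /cards1P [x ex] : #|e| == 1%N by rewrite (unifH e eH).
      by apply/imsetP; exists x => //; rewrite inE -ex.
    have [V0 [V0U cV0]] := @sub_card _ U s'.+1 (leq_trans lt HU).
    exists (fun _ => V0); split => //.
    + by move=> i j; rewrite !ord1.
    + move=> f fV.
      have -> : [set f i | i : 'I_1] = [set f ord0].
        apply/setP => y; rewrite !inE; apply/imsetP/eqP => [[i _ ->]|->].
          by rewrite ord1.
        by exists ord0.
      by have := fintype.subsetP V0U _ (fV ord0); rewrite inE.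
  rewrite expr0 mulr1 -rhoE expr1.
  have h : #|H|%:R <= s'%:R :> R by rewrite ler_nat.
  have h2 := ler_wpM2r (ltW rho0) h.
  have h3 : 0 <= rho * rho by rewrite mulr_ge0 // ltW.
  lra.

- set N : R := n%:R; rewrite -/N in rhoE.
  have n0 : (0 < n)%N.
    by rewrite -(ltr0n R) -[n%:R]/N -rhoE exprn_gt0.
  have N0 : 0 <= N by rewrite ler0n.
  have rho1 : 1 <= rho.
    rewrite leNgt; apply/negP => r1.
    have := exprn_ilt1 (s'.+1 ^ k.+1) (ltW rho0) r1.
    rewrite rhoE expn_eq0 /= => h.
    have : (1 <= N) by rewrite /N ler1n.
    by rewrite leNgt h.
  have rhosN : rho ^+ s'.+1 <= N.
    rewrite -rhoE; apply: (ler_weXn2l rho1).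
    by rewrite -{1}(expn1 s'.+1) leq_pexp2l.
  have hG : forall S, S \in Ss n s'.+1 ->
      (#|Gset k H S|)%:R * rho ^+ s'.+1 <= (s' + 4)%:R * N ^+ k.+1.
    move=> S SS.
    have := IH n (Gset k H S) (rho ^+ s'.+1) (exprn_gt0 _ rho0) _ (@Gunif _ _ _ _)
      (Gfree s0 nH SS).
    rewrite -exprM -expnS => /(_ rhoE) h.
    apply: le_trans h _.
    have h1 : s'%:R * N ^+ k * rho ^+ s'.+1 <= s'%:R * N ^+ k * N.
      by apply: ler_wpM2l => //; rewrite mulr_ge0 // exprn_ge0.
    rewrite natrD exprS; lra.
  pose d f := #|Dset H f|.
  pose a f := ((d f).+1 - s'.+1)%N.
  pose A := (\sum_(f in Fk n k) a f)%N.
  pose G := (\sum_(S in Ss n s'.+1) #|Gset k H S|)%N.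
  have hAn : (A ^ s'.+1 <= #|Fk n k| ^ s' * (s'.+1`! * G))%N.
    apply: leq_trans (powmean _ _ s') _.
    rewrite leq_mul2l; apply/orP; right.
    by rewrite /G sumG ffact_sum.
  have hF : (#|Fk n k| <= n ^ k.+1)%N.
    by rewrite card_draws card_ord bin_le_pow.
  have hSs : (s'.+1`! * #|Ss n s'.+1| <= n ^ s'.+1)%N.
    by rewrite card_draws card_ord mulnC bin_ffact ffact_ub.
  have hHn : (#|H| <= A + s' * #|Fk n k|)%N.
    apply: leq_trans (cardH unifH) _.
    rewrite /A mulnC -sum_nat_const -big_split /=.
    have L : forall m, (m <= m.+1 - s'.+1 + s')%N by move=> m; lia.
    by apply: leq_sum => f _; apply: L.
  have f1 : A%:R ^+ s'.+1 <= #|Fk n k|%:R ^+ s' * (s'.+1`!%:R * G%:R) :> R.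
    by rewrite -!natrX -!natrM ler_nat.
  have f2 : G%:R * rho ^+ s'.+1 <= #|Ss n s'.+1|%:R * ((s' + 4)%:R * N ^+ k.+1).
    rewrite /G natr_sum mulr_suml mulr_natl -sumr_const.
    by apply: ler_sum => S SS; apply: hG.
  have f3 : #|Fk n k|%:R <= N ^+ k.+1 by rewrite -natrX ler_nat.
  have f4 : s'.+1`!%:R * #|Ss n s'.+1|%:R <= N ^+ s'.+1 by rewrite -natrX -natrM ler_nat.
  have hA : A%:R * rho <= 4 * N ^+ k.+2.
    have c0 : 0 <= A%:R * rho by rewrite mulr_ge0 // ?ler0n // ltW.
    have c1 : 0 <= 4 * N ^+ k.+2 by rewrite mulr_ge0 // exprn_ge0.
    rewrite -(ler_pXn2r (ltn0Sn s')) ?nnegrE //.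
    rewrite exprMn.
    apply: le_trans (ler_wpM2r (exprn_ge0 _ (ltW rho0)) f1) _.
    rewrite -mulrA -mulrA.
    apply: le_trans (ler_wpM2l (exprn_ge0 _ (ler0n _ _)) (ler_wpM2l (ler0n _ _) f2)) _.
    rewrite [X in X <= _](_ : _ = #|Fk n k|%:R ^+ s' * (s'.+1`!%:R * #|Ss n s'.+1|%:R * ((s' + 4)%:R * N ^+ k.+1))); last by ring.
    have g1 : s'.+1`!%:R * #|Ss n s'.+1|%:R * ((s' + 4)%:R * N ^+ k.+1)
       <= N ^+ s'.+1 * ((s' + 4)%:R * N ^+ k.+1).
      by apply: ler_wpM2r => //; rewrite mulr_ge0 // exprn_ge0.
    idtac.
    apply: le_trans (ler_wpM2l (exprn_ge0 _ (ler0n _ _)) g1) _.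
    have g2 : #|Fk n k|%:R ^+ s' <= N ^+ k.+1 ^+ s' :> R.
      by apply: lerXn2r => //; rewrite nnegrE ?exprn_ge0 ?ler0n.
    apply: le_trans (ler_wpM2r _ g2) _.
      by rewrite mulr_ge0 ?exprn_ge0 // mulr_ge0 ?exprn_ge0.
    have e : N ^+ k.+1 ^+ s' * (N ^+ s'.+1 * ((s' + 4)%:R * N ^+ k.+1))
        = (s' + 4)%:R * N ^+ (k.+2 * s'.+1).
      have ex : (k.+2 * s'.+1 = k.+1 * s' + s'.+1 + k.+1)%N by rewrite !mulSn; ring.
      rewrite ex (exprD N (k.+1 * s' + s'.+1)) (exprD N (k.+1 * s')) exprM.
      set X := N ^+ k.+1 ^+ s'; set Y := N ^+ s'.+1; set Z := N ^+ k.+1.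
      by rewrite [RHS]mulrCA mulrA.
    rewrite e exprMn -exprM.
    apply: ler_wpM2r; first exact: exprn_ge0.
    rewrite -(natrX R 4) ler_nat.
    elim: s' {IH rhoE hG hAn hSs hHn f1 f2 f4 c0 e g1 g2 rhosN a A G s0 nH} => // m IHm.
    rewrite expnS; lia.
  have hHr : #|H|%:R <= A%:R + s'%:R * #|Fk n k|%:R :> R.
    by rewrite -natrM -natrD ler_nat.
  have := ler_wpM2r (ltW rho0) hHr.
  have h5 : s'%:R * #|Fk n k|%:R * rho <= s'%:R * N ^+ k.+1 * rho.
    apply: ler_wpM2r; first exact: ltW.
    by apply: ler_wpM2l.
  lra.
Qed.


Theorem lemma2p4 (R : realType) (t s n : nat) (H : {set {set 'I_n}}) :
  (2 <= t)%N -> (1 <= s)%N ->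
  uniform t H ->
  ~ contains_ordered_Kts t s H ->
  (#|H|%:R : R) <=
    2 * (n%:R `^ (t%:R - 1 / (t%:R * (s%:R ^+ t.-1)))).
Proof.
case: t => // k k1 s1 unifH nH; rewrite [k.+1.-1]/=.
have cHt : (2 * #|H| <= n ^ k.+1)%N.
  have h1 : (#|H| <= 'C(n, k.+1))%N.
    rewrite -[n in 'C(n, _)]card_ord -card_draws; apply: subset_leq_card.
    by apply/fintype.subsetP => e eH; rewrite inE (unifH e eH).
  apply: leq_trans (ffact_ub n k.+1); rewrite -bin_ffact mulnC.
  apply: leq_mul => //.
  case: k k1 {unifH nH h1} => // k _.
  by rewrite factS; apply: (@leq_trans k.+2) => //; apply: leq_pmulr; exact: fact_gt0.
have E2 : 2 * #|H|%:R <= n%:R ^+ k.+1 :> R.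
  by rewrite -natrX -(natrM R 2) ler_nat.
case: (posnP n) => [n0|n0].
  have : #|H|%:R <= 0 :> R.
    have nR : n%:R = 0 :> R by rewrite n0.
    by move: E2; rewrite nR expr0n /=; lra.
  move=> h; apply: le_trans h _; rewrite mulr_ge0 // powR_ge0.
set N : R := n%:R.
have N0 : 0 < N by rewrite ltr0n.
set D : R := k.+1%:R * s%:R ^+ k.
have D0 : 0 < D by rewrite /D mulr_gt0 // exprn_gt0 // ltr0n.
set sg := N `^ (1 / D).
have sg0 : 0 < sg by rewrite powR_gt0.
have sgm : sg ^+ (k.+1 * s ^ k) = N.
  rewrite -powR_mulrn ?ltW // -powRrM natrM natrX -/D.
  by rewrite mul1r mulVf ?gt_eqF // powRr1 // ltW.
have key := @mainP R s k s1 n H (sg ^+ k.+1) (exprn_gt0 _ sg0).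
move: key; rewrite -exprM sgm => /(_ erefl unifH nH) key.
have -> : N `^ (k.+1%:R - 1 / D) = N ^+ k.+1 / sg.
  rewrite powRB; last by apply/implyP => _; rewrite (gt_eqF N0).
  by rewrite (powR_mulrn _ (ltW N0)).
rewrite mulrA ler_pdivlMr //.
have NK : N ^+ k.+1 = N * N ^+ k by rewrite exprS.
case: (lerP sg 4) => sg4.
  have : #|H|%:R * sg <= #|H|%:R * 4 by apply: ler_wpM2l; rewrite ?ler0n.
  lra.
have Q4 : 4 <= sg ^+ k.
  apply: le_trans (ltW sg4) (ler_eXnr k1 _); lra.
have F3 : (s.-1)%:R * sg <= N.
  rewrite -sgm.
  have m1 : (s.-1 <= (k.+1 * s ^ k).-1)%N.
    have : (s <= k.+1 * s ^ k)%N.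
      have sk : (s <= s ^ k)%N by rewrite -{1}(expn1 s) leq_pexp2l.
      move: sk; set X := (s ^ k)%N => sk; nia.
    lia.
  have pm : (0 < k.+1 * s ^ k)%N by rewrite muln_gt0 expn_gt0 s1.
  rewrite -(prednK pm) exprS mulrC; apply: ler_wpM2l; first exact: ltW.
  have sg1 : 1 <= sg by lra.
  apply: le_trans (ler_weXn2l sg1 m1).
  have : (s.-1)%:R <= 4 ^+ s.-1 :> R.
    rewrite -(natrX R 4) ler_nat.
    elim: (s.-1) => // j IHj; rewrite expnS; lia.
  move/le_trans; apply.
  by apply: lerXn2r; rewrite ?nnegrE //; lra.
have sgQ : sg ^+ k.+1 = sg * sg ^+ k by rewrite exprS.
rewrite sgQ in key.
have P1 : 4 * N ^+ k.+1 <= sg ^+ k * N ^+ k.+1.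
  by apply: ler_wpM2r => //; rewrite exprn_ge0 // ltW.
have P2 : (s.-1)%:R * sg * (N ^+ k * sg ^+ k) <= N * (N ^+ k * sg ^+ k).
  by apply: ler_wpM2r => //; rewrite mulr_ge0 // exprn_ge0 // ltW.
have Qpos : 0 < sg ^+ k by rewrite exprn_gt0.
rewrite -(ler_pM2r Qpos).
have e1 : #|H|%:R * (sg * sg ^+ k) = #|H|%:R * sg * sg ^+ k by rewrite mulrA.
have e2 : (s.-1)%:R * N ^+ k * (sg * sg ^+ k) = (s.-1)%:R * sg * (N ^+ k * sg ^+ k) by ring.
rewrite NK in P1 key *.
have e3 : N * (N ^+ k * sg ^+ k) = N * N ^+ k * sg ^+ k by rewrite mulrA.
lra.
Qed.
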